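(* Let $\alpha,\beta,\gamma\in\mathbb{R}$ with $\gamma\neq 0$, and let $G_2$ be the connected, simply connected Lie group whose Lie algebra $\mathfrak{g}_2$ has a basis $\{e_1,e_2,e_3\}$ with $[e_1,e_2]=\gamma e_2-\beta e_3$, $[e_1,e_3]=-\beta e_2-\gamma e_3$, $[e_2,e_3]=\alpha e_1$, equipped with the left-invariant Lorentzian metric $g$ for which $\{e_1,e_2,e_3\}$ is pseudo-orthonormal with $e_3$ timelike, and with the product structure $J$. Let $\lambda_0,c\in\mathbb{R}$. Then there exists a derivation $D$ of $\mathfrak{g}_2$ with $\widetilde{\mathrm{Ric}}^0=(s^0\lambda_0+c)\mathrm{Id}+D$ (i.e. $(G_2,g,J)$ is an algebraic Schouten soliton associated to the canonical connection $\nabla^0$) if and only if $\alpha=\beta=0$ and $c=-\gamma^2+2\gamma^2\lambda_0$.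
   Context: Pseudo-orthonormal means $g(e_1,e_1)=g(e_2,e_2)=1$, $g(e_3,e_3)=-1$, $g(e_i,e_j)=0$ for $i\neq j$; left-invariant tensors are identified with their values on $\mathfrak{g}$. $\nabla$ is the Levi-Civita connection of $g$. The product structure $J$ is the left-invariant endomorphism with $Je_1=e_1$, $Je_2=e_2$, $Je_3=-e_3$. The canonical connection is $\nabla^0_XY=\nabla_XY-\frac12(\nabla_XJ)JY$, and the Kobayashi–Nomizu connection is $\nabla^1_XY=\nabla^0_XY-\frac14[(\nabla_YJ)JX-(\nabla_{JY}J)X]$. For $k=0,1$: $R^k(X,Y)Z=\nabla^k_X\nabla^k_YZ-\nabla^k_Y\nabla^k_XZ-\nabla^k_{[X,Y]}Z$; $\rho^k(X,Y)=-g(R^k(X,e_1)Y,e_1)-g(R^k(X,e_2)Y,e_2)+g(R^k(X,e_3)Y,e_3)$; $\widetilde\rho^k(X,Y)=\frac12(\rho^k(X,Y)+\rho^k(Y,X))$; $\widetilde{\mathrm{Ric}}^k$ is defined by $\widetilde\rho^k(X,Y)=g(\widetilde{\mathrm{Ric}}^k(X),Y)$; and $s^k=\widetilde\rho^k(e_1,e_1)+\widetilde\rho^k(e_2,e_2)-\widetilde\rho^k(e_3,e_3)$. A derivation of $\mathfrak{g}$ is a linear map $D$ with $D[X,Y]=[DX,Y]+[X,DY]$. $(G,g,J)$ is an algebraic Schouten soliton associated to $\nabla^k$ (with real constants $\lambda_0,c$) if $\widetilde{\mathrm{Ric}}^k=(s^k\lambda_0+c)\mathrm{Id}+D$ for some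 derivation $D$. *)

(* Defs.v *)
(* Left-invariant tensors on the simply connected Lie group
   are identified with their values on the Lie algebra g = R^3 (row vectors),
   with basis e_1,e_2,e_3 = delta_mx 0 i for i = 0,1,2. *)
From HB Require Import structures.
From mathcomp Require Import all_boot all_order all_algebra.
Set Implicit Arguments. Unset Strict Implicit. Unset Printing Implicit Defensive.
Import Order.TTheory GRing.Theory Num.Theory.
Local Open Scope ring_scope.

Section Defs.
Variable R : realFieldType.

Definition vec := 'rV[R]_3.

Definition i1 : 'I_3 := @Ordinal 3 0 isT.
Definition i2 : 'I_3 := @Ordinal 3 1 isT.
Definition i3 : 'I_3 := @Ordinal 3 2 isT.

Definition ev (i : 'I_3) : vec := delta_mx 0 i.

Definition mk3 (a b c : R) : vec := \row_k [:: a; b; c]`_k.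

Definition eta (i : 'I_3) : R := if i == i3 then -1 else 1.

Definition gm (X Y : vec) : R := \sum_i eta i * X 0 i * Y 0 i.

Definition Jm (X : vec) : vec := \row_i (eta i * X 0 i).

(* Lie bracket of g_2:
   [e1,e2] = gamma e2 - beta e3, [e1,e3] = - beta e2 - gamma e3,
   [e2,e3] = alpha e1, extended bilinearly and skew-symmetrically. *)
Definition br2 (alpha beta gamma : R) (X Y : vec) : vec :=
  let x1 := X 0 i1 in let x2 := X 0 i2 in let x3 := X 0 i3 in
  let y1 := Y 0 i1 in let y2 := Y 0 i2 in let y3 := Y 0 i3 in
  (x1 * y2 - x2 * y1) *: mk3 0 gamma (- beta)
  + (x1 * y3 - x3 * y1) *: mk3 0 (- beta) (- gamma)
  + (x2 * y3 - x3 * y2) *: mk3 alpha 0 0.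

Variable br : vec -> vec -> vec.

(* Levi-Civita connection of the left-invariant metric (Koszul formula):
   2 g(nabla_X Y, Z) = g([X,Y],Z) - g([Y,Z],X) + g([Z,X],Y). *)
Definition LC (X Y : vec) : vec :=
  \sum_k (eta k * ((gm (br X Y) (ev k) - gm (br Y (ev k)) X
                    + gm (br (ev k) X) Y) / 2)) *: ev k.

Definition nablaJ (X Y : vec) : vec := LC X (Jm Y) - Jm (LC X Y).

Definition nabla0 (X Y : vec) : vec := LC X Y - (1 / 2) *: nablaJ X (Jm Y).

Definition nabla1 (X Y : vec) : vec :=
  nabla0 X Y - (1 / 4) *: (nablaJ Y (Jm X) - nablaJ (Jm Y) X).

Variable nab : vec -> vec -> vec.

Definition Curv (X Y Z : vec) : vec :=
  nab X (nab Y Z) - nab Y (nab X Z) - nab (br X Y) Z.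

Definition rho (X Y : vec) : R :=
  \sum_k (- eta k) * gm (Curv X (ev k) Y) (ev k).

Definition rhot (X Y : vec) : R := (rho X Y + rho Y X) / 2.

(* g(Ric X, Y) = rhot X Y *)
Definition Ric (X : vec) : vec := \sum_k (eta k * rhot X (ev k)) *: ev k.

Definition scal : R := \sum_k eta k * rhot (ev k) (ev k).

End Defs.

(* A derivation of (R^3, br), as a linear map X |-> X *m D on row vectors *)
Definition is_derivation (R : realFieldType) (br : vec R -> vec R -> vec R)
  (D : 'M[R]_3) : Prop :=
  forall X Y : vec R, br X Y *m D = br (X *m D) Y + br X (Y *m D).

(* Main.v *)
Require Import Defs.
From HB Require Import structures.
From mathcomp Require Import all_boot all_order all_algebra ring lra.
Import Order.TTheory GRing.Theory Num.Theory.
Local Open Scope ring_scope.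

Section S.
Variables (R : realFieldType).

Lemma mk3E1 (x y z : R) : mk3 x y z 0 i1 = x. Proof. by rewrite mxE. Qed.
Lemma mk3E2 (x y z : R) : mk3 x y z 0 i2 = y. Proof. by rewrite mxE. Qed.
Lemma mk3E3 (x y z : R) : mk3 x y z 0 i3 = z. Proof. by rewrite mxE. Qed.

Lemma vecE (X : vec R) : X = mk3 (X 0 i1) (X 0 i2) (X 0 i3).
Proof.
apply/rowP => i; rewrite mxE; case: i => [[|[|[|n]]] Hn] //=.
- by congr (X 0 _); apply/val_inj.
- by congr (X 0 _); apply/val_inj.
- by congr (X 0 _); apply/val_inj.
Qed.

Lemma mk3_eq (x y z x' y' z' : R) : x = x' -> y = y' -> z = z' -> mk3 x y z = mk3 x' y' z'.
Proof. by move=> -> -> ->. Qed.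

Lemma mk3D (x y z x' y' z' : R) : mk3 x y z + mk3 x' y' z' = mk3 (x + x') (y + y') (z + z').
Proof. by apply/rowP => i; rewrite !mxE; case: i => [[|[|[|n]]] Hn]. Qed.
Lemma mk3N (x y z : R) : - mk3 x y z = mk3 (-x) (-y) (-z).
Proof. by apply/rowP => i; rewrite !mxE; case: i => [[|[|[|n]]] Hn] //=; rewrite oppr0. Qed.
Lemma mk3Z (s x y z : R) : s *: mk3 x y z = mk3 (s * x) (s * y) (s * z).
Proof. by apply/rowP => i; rewrite !mxE; case: i => [[|[|[|n]]] Hn] //=; rewrite mulr0. Qed.

Lemma sum3 (V : zmodType) (F : 'I_3 -> V) : \sum_k F k = F i1 + F i2 + F i3.
Proof.
rewrite !big_ord_recr big_ord0 /= add0r.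
by congr (F _ + F _ + F _); apply/val_inj.
Qed.

Lemma eta1 : Defs.eta R i1 = 1. Proof. by []. Qed.
Lemma eta2 : Defs.eta R i2 = 1. Proof. by []. Qed.
Lemma eta3 : Defs.eta R i3 = -1. Proof. by []. Qed.

Lemma ev1 : Defs.ev R i1 = mk3 1 0 0.
Proof. by apply/rowP => i; rewrite !mxE; case: i => [[|[|[|n]]] Hn]. Qed.
Lemma ev2 : Defs.ev R i2 = mk3 0 1 0.
Proof. by apply/rowP => i; rewrite !mxE; case: i => [[|[|[|n]]] Hn]. Qed.
Lemma ev3 : Defs.ev R i3 = mk3 0 0 1.
Proof. by apply/rowP => i; rewrite !mxE; case: i => [[|[|[|n]]] Hn]. Qed.

Lemma gm_mk3 (x y z x' y' z' : R) : gm (mk3 x y z) (mk3 x' y' z') = x * x' + y * y' - z * z'.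
Proof. rewrite /gm sum3 !mk3E1 !mk3E2 !mk3E3 eta1 eta2 eta3; ring. Qed.

Lemma Jm_mk3 (x y z : R) : Jm (mk3 x y z) = mk3 x y (- z).
Proof. by apply/rowP => i; rewrite !mxE; case: i => [[|[|[|n]]] Hn] //=; rewrite ?mul1r ?mulN1r. Qed.

Lemma br2_mk3 (a b g x1 x2 x3 y1 y2 y3 : R) :
  br2 a b g (mk3 x1 x2 x3) (mk3 y1 y2 y3) =
  mk3 (a * (x2 * y3 - x3 * y2))
      (g * (x1 * y2 - x2 * y1) - b * (x1 * y3 - x3 * y1))
      (- b * (x1 * y2 - x2 * y1) - g * (x1 * y3 - x3 * y1)).
Proof.
rewrite /br2 !mk3E1 !mk3E2 !mk3E3 !mk3Z !mk3D; apply: mk3_eq; ring.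
Qed.

Ltac norm3 := rewrite ?(sum3, eta1, eta2, eta3, ev1, ev2, ev3, br2_mk3, gm_mk3, Jm_mk3, mk3Z, mk3D, mk3N).

Lemma nabla0E (a b g x1 x2 x3 y1 y2 y3 : R) :
  nabla0 (br2 a b g) (mk3 x1 x2 x3) (mk3 y1 y2 y3) =
  mk3 (g * x2 * y2 - a / 2 * x3 * y2) (- g * x2 * y1 + a / 2 * x3 * y1) 0.
Proof.
rewrite /nabla0 /nablaJ /LC.
norm3.
apply: mk3_eq; field; rewrite ?pnatr_eq0 //.
Qed.
Lemma CurvE (a b g x1 x2 x3 y1 y2 y3 z1 z2 z3 : R) :
  Curv (br2 a b g) (nabla0 (br2 a b g)) (mk3 x1 x2 x3) (mk3 y1 y2 y3) (mk3 z1 z2 z3) =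
  let q := (g ^+ 2 + a * b / 2) * (x1 * y2 - x2 * y1) + (a * g / 2 - g * b) * (x1 * y3 - x3 * y1) in
  mk3 (- q * z2) (q * z1) 0.
Proof.
rewrite /Curv !nabla0E br2_mk3 nabla0E !mk3N !mk3D /=.
apply: mk3_eq; field; rewrite ?pnatr_eq0 //.
Qed.

Lemma rhoE (a b g x1 x2 x3 y1 y2 y3 : R) :
  rho (br2 a b g) (nabla0 (br2 a b g)) (mk3 x1 x2 x3) (mk3 y1 y2 y3) =
  - (g ^+ 2 + a * b / 2) * (x1 * y1 + x2 * y2) - (a * g / 2 - g * b) * x3 * y2.
Proof.
rewrite /rho sum3 ev1 ev2 ev3 !CurvE /= !gm_mk3 eta1 eta2 eta3.
ring.
Qed.

Lemma RicE (a b g x1 x2 x3 : R) :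
  Ric (br2 a b g) (nabla0 (br2 a b g)) (mk3 x1 x2 x3) =
  mk3 ((- g ^+ 2 - a * b / 2) * x1)
      ((- g ^+ 2 - a * b / 2) * x2 + (- a * g / 4 + b * g / 2) * x3)
      (- (- a * g / 4 + b * g / 2) * x2).
Proof.
rewrite /Ric /rhot sum3 ev1 ev2 ev3 !rhoE eta1 eta2 eta3 !mk3Z !mk3D.
apply: mk3_eq; field; rewrite ?pnatr_eq0 //.
Qed.

Lemma scalE (a b g : R) :
  scal (br2 a b g) (nabla0 (br2 a b g)) = 2 * (- g ^+ 2 - a * b / 2).
Proof.
rewrite /scal /rhot sum3 ev1 ev2 ev3 !rhoE eta1 eta2 eta3.
field; rewrite ?pnatr_eq0 //.
Qed.
Lemma mulmx_mk3 (x y z : R) (D : 'M[R]_3) :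
  mk3 x y z *m D = mk3 (x * D i1 i1 + y * D i2 i1 + z * D i3 i1)
                       (x * D i1 i2 + y * D i2 i2 + z * D i3 i2)
                       (x * D i1 i3 + y * D i2 i3 + z * D i3 i3).
Proof.
apply/rowP => j; rewrite !mxE sum3 mk3E1 mk3E2 mk3E3.
case: j => [[|[|[|n]]] Hn] //=.
- by rewrite (_ : Ordinal Hn = i1) //; apply/val_inj.
- by rewrite (_ : Ordinal Hn = i2) //; apply/val_inj.
- by rewrite (_ : Ordinal Hn = i3) //; apply/val_inj.
Qed.

Lemma eq_via (x y P k : R) : x = y -> P = k * (x - y) -> P = 0.
Proof. by move=> -> ->; rewrite subrr mulr0. Qed.

Lemma eq_via2 (x1 x2 P k1 k2 : R) : x1 = 0 -> x2 = 0 -> P = k1 * x1 + k2 * x2 -> P = 0.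
Proof. by move=> -> -> ->; rewrite !mulr0 addr0. Qed.

End S.


Theorem theorem4p4 (R : realFieldType) (alpha beta gamma lambda0 c : R) :
  gamma != 0 ->
  ((exists D : 'M[R]_3,
      is_derivation (br2 alpha beta gamma) D /\
      forall X : vec R,
        Ric (br2 alpha beta gamma) (nabla0 (br2 alpha beta gamma)) X =
        (scal (br2 alpha beta gamma) (nabla0 (br2 alpha beta gamma)) * lambda0 + c) *: X
        + X *m D)
   <->
   (alpha = 0 /\ beta = 0 /\ c = - gamma ^+ 2 + 2 * gamma ^+ 2 * lambda0)).
Proof.
move=> g0; rewrite scalE; split.
- case=> D [HD HR].
  have HXD : forall x1 x2 x3, mk3 x1 x2 x3 *m D =
     Ric (br2 alpha beta gamma) (nabla0 (br2 alpha beta gamma)) (mk3 x1 x2 x3)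
     - (2 * (- gamma ^+ 2 - alpha * beta / 2) * lambda0 + c) *: mk3 x1 x2 x3.
    by move=> x1 x2 x3; rewrite HR addrC addKr.
  have H12 := HD (mk3 1 0 0) (mk3 0 1 0).
  have H13 := HD (mk3 1 0 0) (mk3 0 0 1).
  have H23 := HD (mk3 0 1 0) (mk3 0 0 1).
  rewrite !br2_mk3 !HXD !RicE !mk3Z !mk3N !mk3D !br2_mk3 !mk3D in H12 H13 H23.
  move/(congr1 (fun v : vec R => v 0 i2)): (H12); rewrite !mk3E2 => E1.
  move/(congr1 (fun v : vec R => v 0 i3)): (H12); rewrite !mk3E3 => E2.
  move/(congr1 (fun v : vec R => v 0 i2)): (H13); rewrite !mk3E2 => E3.
  move/(congr1 (fun v : vec R => v 0 i1)): (H23); rewrite !mk3E1 => E4.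
  have {E1} E1 : gamma * ((- gamma ^+ 2 - alpha * beta / 2) - (2 * (- gamma ^+ 2 - alpha * beta / 2) * lambda0 + c)) + 2 * beta * (- alpha * gamma / 4 + beta * gamma / 2) = 0.
    by apply: (@eq_via _ _ _ _ (-1) E1); field.
  have {E2} E2 : beta * (2 * (- gamma ^+ 2 - alpha * beta / 2) * lambda0 + c) + 2 * beta * ((- gamma ^+ 2 - alpha * beta / 2) - (2 * (- gamma ^+ 2 - alpha * beta / 2) * lambda0 + c)) - 2 * gamma * (- alpha * gamma / 4 + beta * gamma / 2) = 0.
    by apply: (@eq_via _ _ _ _ (1) E2); field.
  have {E3} E3 : 2 * gamma * (- alpha * gamma / 4 + beta * gamma / 2) + (2 * (- gamma ^+ 2 - alpha * beta / 2) * lambda0 + c) * beta = 0.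
    by apply: (@eq_via _ _ _ _ (-1) E3); field.
  have {E4} E4 : alpha * (2 * (- gamma ^+ 2 - alpha * beta / 2) * lambda0 + c) = 0.
    by apply: (@eq_via _ _ _ _ (1) E4); field.
  clear H12 H13 H23 HXD HR HD.
  move: E1 E2 E3 E4; set K := (2 * _ * lambda0 + c) => E1 E2 E3 E4.
  have Hbr : beta * (- gamma ^+ 2 - alpha * beta / 2) = 0.
    by apply: (@eq_via2 _ _ _ _ (1/2) (1/2) E2 E3); field.
  have gp : 0 < gamma ^+ 2 by rewrite exprn_even_gt0.
  have hb : beta = 0.
    case: (eqVneq beta 0) => // bn.
    have r0 : - gamma ^+ 2 - alpha * beta / 2 = 0.
      by move/eqP: Hbr; rewrite mulf_eq0 (negbTE bn) => /eqP.
    have h1 : gamma ^+ 2 * (alpha * (2 * beta - alpha)) = 0.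
      by apply: (@eq_via2 _ _ _ _ (2*alpha) (-2*beta) E3 E4); field.
    have h2 : alpha * (2 * beta - alpha) = 0.
      by move/eqP: h1; rewrite mulf_eq0 expf_eq0 /= (negbTE g0) => /eqP.
    exfalso; nra.
  have hK : gamma * (- gamma ^+ 2 - K) = 0.
    by apply: (@eq_via _ _ _ _ 1 E1); rewrite hb; field.
  move/eqP: hK; rewrite mulf_eq0 (negbTE g0) /= subr_eq0 => /eqP hK.
  have ha : alpha = 0.
    by move/eqP: E4; rewrite -hK mulf_eq0 oppr_eq0 expf_eq0 (negbTE g0) orbF => /eqP.
  split => //; split => //.
  apply/eqP; rewrite -subr_eq0; apply/eqP.
  by apply: (@eq_via _ _ _ _ (-1) hK); rewrite /K ha hb; field.
- case=> ha [hb hc].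
  subst alpha beta c.
  exists (\matrix_(i, j) (if (i == i3) && (j == i3) then gamma ^+ 2 else 0)).
  split.
  + move=> X Y; rewrite (vecE _ X) (vecE _ Y) !br2_mk3 !mulmx_mk3 !mxE /= !br2_mk3 !mk3D.
    apply: mk3_eq; ring.
  + move=> X; rewrite (vecE _ X) RicE mulmx_mk3 !mxE /= mk3Z mk3D.
    apply: mk3_eq; field; rewrite ?pnatr_eq0 //.
Qed.
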